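(* Let $\mathbb{F}$ be a field and let $\mathcal{C}_2 \subsetneqq \mathcal{C}_1 \subseteq \mathbb{F}^n$ be linear codes with $\ell = \dim(\mathcal{C}_1) - \dim(\mathcal{C}_2)$. Then for all integers $1 \leq r \leq \ell$ and $0 \leq \mu \leq n$: $$d_{H,r}(\mathcal{C}_1,\mathcal{C}_2) = d_{M,r}(\Delta(\mathcal{C}_1), \Delta(\mathcal{C}_2)), \qquad K_{H,\mu}(\mathcal{C}_1,\mathcal{C}_2) = K_{M,\mu}(\Delta(\mathcal{C}_1), \Delta(\mathcal{C}_2)).$$
   Context: $\Delta : \mathbb{F}^n \to \mathbb{F}^{n \times n}$ sends $\mathbf{c}$ to the diagonal matrix ${\rm diag}(\mathbf{c})$. For $I \subseteq \{1,\dots,n\}$, $\mathcal{L}_I = \{(c_1,\dots,c_n) \in \mathbb{F}^n \mid c_i = 0 \ \forall i \notin I\}$. Relative generalized Hamming weights: $d_{H,r}(\mathcal{C}_1,\mathcal{C}_2) = \min\{|I| \mid I \subseteq \{1,\dots,n\}, \dim(\mathcal{C}_1 \cap \mathcal{L}_I) - \dim(\mathcal{C}_2 \cap \mathcal{L}_I) \ge r\}$; relative dimension/length profile: $K_{H,\mu}(\mathcal{C}_1,\mathcal{C}_2) = \max\{\dim(\mathcal{C}_1 \cap \mathcal{L}_I) - \dim(\mathcal{C}_2 \cap \mathcal{L}_I) \mid |I| \le \mu\}$. On matrices in $\mathbb{F}^{n\times n}$ (here $m = n$): ${\rm Row}(V)$ is the row space; for a subspace $\mathcal{L}\subseteq\mathbb{F}^n$,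 $\mathcal{V}_\mathcal{L} = \{V \in \mathbb{F}^{n\times n} \mid {\rm Row}(V) \subseteq \mathcal{L}\}$; for nested linear codes $\mathcal{D}_2 \subsetneqq \mathcal{D}_1 \subseteq \mathbb{F}^{n\times n}$, $d_{M,r}(\mathcal{D}_1,\mathcal{D}_2) = \min\{\dim \mathcal{L} \mid \dim(\mathcal{D}_1 \cap \mathcal{V}_\mathcal{L}) - \dim(\mathcal{D}_2 \cap \mathcal{V}_\mathcal{L}) \ge r\}$ and $K_{M,\mu}(\mathcal{D}_1,\mathcal{D}_2) = \max\{\dim(\mathcal{D}_1 \cap \mathcal{V}_\mathcal{L}) - \dim(\mathcal{D}_2 \cap \mathcal{V}_\mathcal{L}) \mid \dim\mathcal{L} \le \mu\}$, over subspaces $\mathcal{L} \subseteq \mathbb{F}^n$. *)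

(* Defs.v *)
From HB Require Import structures.
From mathcomp Require Import all_boot all_order all_algebra.
From mathcomp Require Import boolp.
Set Implicit Arguments. Unset Strict Implicit. Unset Printing Implicit Defensive.
Import GRing.Theory.
Local Open Scope ring_scope.

Section Defs.
Variables (F : fieldType) (n : nat).

Definition Delta : 'Hom('rV[F]_n, 'M[F]_n) := linfun (@diag_mx F n).

Definition DeltaC (C : {vspace 'rV[F]_n}) : {vspace 'M[F]_n} := (Delta @: C)%VS.

(* L_I = { c | c_i = 0 for all i \notin I }, as the kernel of the map
   killing the coordinates in I *)
Definition LI (I : {set 'I_n}) : {vspace 'rV[F]_n} :=
  lker (linfun (fun c : 'rV[F]_n => \row_j (if j \in I then 0 else c 0 j))).

(* relative generalized Hamming weight; min over I (the set is nonempty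
   whenever 1 <= r <= dim C1 - dim C2; n.+1 is a dummy default) *)
Definition dH (C1 C2 : {vspace 'rV[F]_n}) (r : nat) : nat :=
  \big[minn/n.+1]_(I : {set 'I_n} |
       (\dim (C2 :&: LI I) + r <= \dim (C1 :&: LI I))%N) #|I|.

Definition KH (C1 C2 : {vspace 'rV[F]_n}) (mu : nat) : nat :=
  \max_(I : {set 'I_n} | (#|I| <= mu)%N)
     (\dim (C1 :&: LI I) - \dim (C2 :&: LI I)).

(* V_L = { V | Row(V) \subseteq L } = { V | every row of V lies in L } *)
Definition VL (L : {vspace 'rV[F]_n}) : {vspace 'M[F]_n} :=
  (\bigcap_(i : 'I_n) (linfun (fun V : 'M[F]_n => row i V) @^-1: L))%VS.

(* relative generalized matrix weight: least dim L over subspaces L of F^n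
   (dim L <= n always, so ranging k over 'I_n.+1 loses nothing) *)
Definition dM (D1 D2 : {vspace 'M[F]_n}) (r : nat) : nat :=
  \big[minn/n.+1]_(k < n.+1 |
     `[< exists L : {vspace 'rV[F]_n}, \dim L = k /\
          (\dim (D2 :&: VL L) + r <= \dim (D1 :&: VL L))%N >]) (k : nat).

(* relative dimension/length profile (matrix); the differences are bounded
   by dim F^{n x n} = n * n *)
Definition KM (D1 D2 : {vspace 'M[F]_n}) (mu : nat) : nat :=
  \max_(j < (n * n).+1 |
     `[< exists L : {vspace 'rV[F]_n}, (\dim L <= mu)%N /\
          (\dim (D1 :&: VL L) - \dim (D2 :&: VL L))%N = j >]) (j : nat).

End Defs.

(* Main.v *)
Require Import Defs.
From HB Require Import structures.
From mathcomp Require Import all_boot all_order all_algebra.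
From mathcomp Require Import boolp zify.
Set Implicit Arguments. Unset Strict Implicit. Unset Printing Implicit Defensive.
Import GRing.Theory.
Local Open Scope ring_scope.

Section S.
Variables (F : fieldType) (n : nat).
Implicit Types (C L : {vspace 'rV[F]_n}) (I : {set 'I_n}).

Definition kI I : 'rV[F]_n -> 'rV[F]_n := fun c => \row_j (if j \in I then 0 else c 0 j).
Fact kI_lin I : linear (kI I).
Proof. by move=> a u v; apply/rowP => j; rewrite !mxE; case: ifP => _; rewrite ?mulr0 ?addr0. Qed.
HB.instance Definition _ I := GRing.isLinear.Build F _ _ _ (kI I) (kI_lin I).

Lemma memLI I v : (v \in LI F I) = [forall j, (j \notin I) ==> (v 0 j == 0)].
Proof.
rewrite memv_ker (lfunE (kI I)) /kI /=; apply/eqP/forallP => [h j|h].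
  move: h => /(congr1 (fun w : 'rV[F]_n => w 0 j)); rewrite !mxE.
  by case: (j \in I) => //= ->.
apply/rowP => j; rewrite !mxE; case: ifP => // jI.
by move: (h j); rewrite jI /= => /eqP.
Qed.

Lemma memVL L (M : 'M[F]_n) : (M \in VL L) = [forall i, row i M \in L].
Proof.
rewrite memvE /VL; apply/subv_bigcapP/forallP => [h i|h i _].
  by move: (h i isT); rewrite -memvE -memv_preim lfunE.
by rewrite -memvE -memv_preim lfunE; apply: h.
Qed.

Definition J L := [set i : 'I_n | delta_mx 0 i \in L].

Lemma diag_VL L (c : 'rV[F]_n) : (diag_mx c \in VL L) = (c \in LI F (J L)).
Proof.
rewrite memVL memLI; apply/forallP/forallP => h i.
  apply/implyP; rewrite inE => Ni; apply: contraNT Ni => ci.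
  move: (h i); rewrite row_diag_mx => hi.
  by rewrite -[delta_mx _ _](scalerK ci) memvZ.
move: (h i); rewrite row_diag_mx inE; case: (boolP (delta_mx 0 i \in L)) => Di /=.
  by rewrite memvZ.
by move/eqP => ->; rewrite scale0r mem0v.
Qed.

Lemma Delta_inj : injective (Delta F n).
Proof.
move=> a b; rewrite !lfunE /= => h; apply/rowP => j.
by move/matrixP: h => /(_ j j); rewrite !mxE eqxx !mulr1n.
Qed.

Lemma dim_DeltaVL C L : \dim (DeltaC C :&: VL L) = \dim (C :&: LI F (J L)).
Proof.
have -> : (DeltaC C :&: VL L = Delta F n @: (C :&: LI F (J L)))%VS.
  apply/eqP; rewrite eqEsubv; apply/andP; split; apply/subvP => M.
    case/memv_capP => /memv_imgP [c cC ->] cV.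
    by rewrite memv_img // memv_cap cC /= -diag_VL -(lfunE (@diag_mx F n)).
  case/memv_imgP => c /memv_capP [cC cL] ->; rewrite memv_cap memv_img //=.
  by rewrite lfunE /= diag_VL.
apply: limg_dim_eq; apply/eqP; rewrite -subv0; apply/subvP => v.
case/memv_capP => _; rewrite memv_ker memv0 => /eqP h.
by apply/eqP; apply: Delta_inj; rewrite h linear0.
Qed.

Lemma LI_sub I (U : {vspace 'rV[F]_n}) :
  (forall i, i \in I -> delta_mx 0 i \in U) -> (LI F I <= U)%VS.
Proof.
move=> hU; apply/subvP => v; rewrite memLI => /forallP hv.
rewrite (row_sum_delta v); apply: memv_suml => j _.
case: (boolP (j \in I)) => jI; first by rewrite memvZ // hU.
by move: (hv j); rewrite jI /= => /eqP ->; rewrite scale0r mem0v.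
Qed.

Lemma J_LI I : J (LI F I) = I.
Proof.
apply/setP => i; rewrite inE memLI; apply/forallP/idP => [h|iI j].
  apply: contraT => iN; move: (h i); rewrite iN /= mxE !eqxx /=.
  by rewrite oner_eq0.
rewrite mxE eqxx /=; apply/implyP => jN.
by case: (j =P i) => [ji|//]; move: jN; rewrite ji iI.
Qed.

Lemma dim_LI_le I : (\dim (LI F I) <= #|I|)%N.
Proof.
have hs : (LI F I <= <<[seq delta_mx (0%R : 'I_1) i : 'rV[F]_n | i <- enum I]>>)%VS.
  by apply: LI_sub => i iI; apply: memv_span; apply: map_f; rewrite mem_enum.
apply: leq_trans (dimvS hs) _.
by apply: leq_trans (dim_span _) _; rewrite size_map cardE.
Qed.

Lemma dim_LI I : \dim (LI F I) = #|I|.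
Proof.
apply/eqP; rewrite eqn_leq dim_LI_le /=.
have h1 : (n <= \dim (LI F I) + \dim (LI F (~: I)))%N.
  apply: leq_trans (dimv_add_leqif _ _).
  have hn : \dim (fullv : {vspace 'rV[F]_n}) = n by rewrite dimvf /dim /= mul1n.
  rewrite -{1}hn; apply: dimvS; apply/subvP => v _.
  have -> : v = kI (~: I) v + kI I v.
    by apply/rowP => j; rewrite !mxE inE; case: (j \in I); rewrite ?add0r ?addr0.
  rewrite memv_add //.
    rewrite memLI; apply/forallP => j; apply/implyP => jN.
    by rewrite mxE inE jN.
  rewrite memLI; apply/forallP => j; apply/implyP; rewrite inE negbK => jN.
  by rewrite mxE jN.
have h2 := dim_LI_le (~: I).
rewrite cardsCs card_ord setCK in h2.
have h3 : (#|I| <= n)%N by have := max_card I; rewrite card_ord.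
move: h1 h2 h3; move: (\dim (LI F I)) (\dim (LI F (~: I))) #|I| => a b c; lia.
Qed.

Lemma card_J L : (#|J L| <= \dim L)%N.
Proof.
by rewrite -dim_LI; apply: dimvS; apply: LI_sub => i; rewrite inE.
Qed.
End S.

Lemma bigmin_geq (T : finType) (P : pred T) (f : T -> nat) x m :
  (m <= x)%N -> (forall i, P i -> m <= f i)%N -> (m <= \big[minn/x]_(i | P i) f i)%N.
Proof.
move=> hx hf; apply: (big_ind (fun v => m <= v)%N) => //.
by move=> a b ha hb; rewrite leq_min ha hb.
Qed.

Lemma bigmin_leq (T : finType) (P : pred T) (f : T -> nat) x i0 :
  P i0 -> (\big[minn/x]_(i | P i) f i <= f i0)%N.
Proof.
move=> Pi; have : i0 \in index_enum T by rewrite mem_index_enum.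
elim: (index_enum T) => // a r IH; rewrite inE big_cons.
case: (i0 =P a) => [<- _|_ /= /IH h]; first by rewrite Pi geq_minl.
by case: (P a) => //; rewrite geq_min h orbT.
Qed.

Lemma bigmin_leqx (T : finType) (P : pred T) (f : T -> nat) x :
  (\big[minn/x]_(i | P i) f i <= x)%N.
Proof.
by elim/big_rec: _ => // i v _ h; rewrite geq_min h orbT.
Qed.

Theorem theorem8 (F : fieldType) (n : nat) (C1 C2 : {vspace 'rV[F]_n}) :
  (C2 <= C1)%VS -> C2 != C1 ->
  (forall r : nat, (1 <= r <= \dim C1 - \dim C2)%N ->
     dH C1 C2 r = dM (DeltaC C1) (DeltaC C2) r) /\
  (forall mu : nat, (mu <= n)%N ->
     KH C1 C2 mu = KM (DeltaC C1) (DeltaC C2) mu).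
Proof.
move=> _ _; split.
  move=> r _; apply/eqP; rewrite eqn_leq; apply/andP; split.
    apply: bigmin_geq => [|k /asboolP [L [dL hc]]]; first exact: bigmin_leqx.
    rewrite !dim_DeltaVL in hc.
    apply: leq_trans (bigmin_leq _ _ hc) _.
    by rewrite -dL card_J.
  apply: bigmin_geq => [|I hc]; first exact: bigmin_leqx.
  have hI : (#|I| < n.+1)%N by rewrite ltnS; have := max_card I; rewrite card_ord.
  rewrite /dM; apply: (@leq_trans (Ordinal hI)) => //; apply: bigmin_leq.
  apply/asboolP; exists (LI F I); split; first by rewrite dim_LI.
  by rewrite !dim_DeltaVL J_LI.
move=> mu _; apply/eqP; rewrite eqn_leq; apply/andP; split.
  apply/bigmax_leqP => I hI.
  set d := (_ - _)%N.
  have hd : (d < (n * n).+1)%N.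
    rewrite ltnS; apply: (@leq_trans n).
      apply: leq_trans (leq_subr _ _) _.
      apply: leq_trans (dimvS (capvSr _ _)) _.
      by rewrite dim_LI; have := max_card I; rewrite card_ord.
    by case: n {C1 C2 I hI d} => // m; rewrite leq_pmulr.
  apply: leq_trans (leq_bigmax_cond (Ordinal hd) _) => //.
  apply/asboolP; exists (LI F I); split; first by rewrite dim_LI.
  by rewrite !dim_DeltaVL J_LI.
apply/bigmax_leqP => j /asboolP [L [dL <-]].
rewrite !dim_DeltaVL.
apply: leq_trans (leq_bigmax_cond (J L) _) => //.
exact: leq_trans (card_J L) dL.
Qed.
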